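(* Let $\{\mathcal{C}_n\}$ be a sequence of binary linear codes with rates $r_n\to r$ for some $r\in(0,1)$, and let $h^{(n)}$ be the average EXIT function of $\mathcal{C}_n$. The following are equivalent: (S1) $\{\mathcal{C}_n\}$ is capacity achieving on the BEC under bit-MAP decoding; (S2) $\lim_{n\to\infty}h^{(n)}(p)=0$ for $0\le p<1-r$ and $\lim_{n\to\infty}h^{(n)}(p)=1$ for $1-r<p\le1$; (S3) for every $0<\epsilon\le 1/2$, $\lim_{n\to\infty}\big(p^{(n)}_{1-\epsilon}-p^{(n)}_{\epsilon}\big)=0$, where $p^{(n)}_t=\inf\{p\in[0,1]:h^{(n)}(p)\ge t\}$.
   Context: Binary linear codes are assumed proper (no coordinate zero in all codewords) and of minimum distance at least $2$; the rate of a length-$N$, dimension-$K$ code is $K/N$. A codeword $\underline{X}$ is uniform on the code and sent over $\mathrm{BEC}(p)$ (each bit independently erased with probability $p$), giving $\underline{Y}$. The bit-MAP erasure probability of bit $i$, $P_{b,i}(p)$, is the probability that $X_i$ is not uniquely determined by $\underline{Y}$, and $P_b(p)=\frac1N\sum_i P_{b,i}(p)$. The average EXIT function is $h(p)=\frac1N\sum_i H(X_i\mid\underline{Y}_{\sim i})$ (entropy in bits, $\underline{Y}_{\sim i}$ omits coordinate $i$); it is continuous and strictly increasing on $[0,1]$ with $h(0)=0$, $h(1)=1$. A sequence of codes with rates $r_n\to r\in(0,1)$ is capacity achieving on the BEC under bit-MAP decoding if $\lim_n P_b^{(n)}(p)=0$ for every $p\in[0,1-r)$. *)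

(* Defs.v *)
From mathcomp Require Import all_boot.
From Stdlib Require Import Reals ClassicalEpsilon.

Set Implicit Arguments.
Unset Strict Implicit.
Unset Printing Implicit Defensive.

Definition word (N : nat) := {ffun 'I_N -> bool}.
Definition zerow (N : nat) : word N := [ffun => false].
Definition xorw (N : nat) (u v : word N) : word N := [ffun j => xorb (u j) (v j)].
Definition weight (N : nat) (u : word N) : nat := #|[set j | u j]|.

Definition is_binary_linear_code (N : nat) (C : {set word N}) : Prop :=
  zerow N \in C /\ (forall u v, u \in C -> v \in C -> xorw u v \in C).
Definition proper_code (N : nat) (C : {set word N}) : Prop :=
  forall i : 'I_N, exists2 c, c \in C & c i = true.
Definition min_dist_ge2 (N : nat) (C : {set word N}) : Prop :=
  forall c, c \in C -> c != zerow N -> (1 < weight c)%N.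
Definition code_dim (N : nat) (C : {set word N}) : nat := trunc_log 2 #|C|.
Definition rate (N : nat) (C : {set word N}) : R := (INR (code_dim C) / INR N)%R.

Notation "\sumR_ ( i 'in' A ) F" := (\big[Rplus/0%R]_(i in A) F%R)
  (at level 41, F at level 41, i, A at level 50).
Notation "\sumR_ ( i : T ) F" := (\big[Rplus/0%R]_(i : T) F%R)
  (at level 41, F at level 41, i at level 50).

Definition indR (b : bool) : R := if b then 1%R else 0%R.

(** BEC(p): E is the (random) set of erased positions. *)
Definition erasure_prob (N : nat) (p : R) (E : {set 'I_N}) : R :=
  (p ^ #|E| * (1 - p) ^ (subn N #|E|))%R.

(** Joint probability of (X = x, erasure pattern = E), X uniform on C. *)
Definition jointw (N : nat) (C : {set word N}) (p : R) (x : word N) (E : {set 'I_N}) : R :=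
  (/ INR #|C| * erasure_prob p E)%R.

(** Bit-MAP erasure probability of bit i: X_i not uniquely determined by Y. *)
Definition bit_erasure_prob (N : nat) (C : {set word N}) (p : R) (i : 'I_N) : R :=
  \sumR_(x in C) \sumR_(E : {set 'I_N})
    (jointw C p x E *
     indR [exists c in C, [forall j, (j \notin E) ==> (c j == x j)] && (c i != x i)])%R.

Definition Pb (N : nat) (C : {set word N}) (p : R) : R :=
  (/ INR N * \sumR_(i : 'I_N) bit_erasure_prob C p i)%R.

(** Channel output with coordinate i omitted (encoded by None at i; erasures are None). *)
Definition obs_wo (N : nat) (i : 'I_N) (x : word N) (E : {set 'I_N})
  : {ffun 'I_N -> option bool} :=
  [ffun j => if (j == i) || (j \in E) then None else Some (x j)].

(** P(Y_~i = y) and P(X_i = b, Y_~i = y). *)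
Definition probY (N : nat) (C : {set word N}) (p : R) (i : 'I_N)
  (y : {ffun 'I_N -> option bool}) : R :=
  \sumR_(x in C) \sumR_(E : {set 'I_N}) (jointw C p x E * indR (obs_wo i x E == y))%R.
Definition probXY (N : nat) (C : {set word N}) (p : R) (i : 'I_N) (b : bool)
  (y : {ffun 'I_N -> option bool}) : R :=
  \sumR_(x in C) \sumR_(E : {set 'I_N})
    (jointw C p x E * indR ((obs_wo i x E == y) && (x i == b)))%R.

Definition log2 (t : R) : R := (ln t / ln 2)%R.

Definition cond_entropy (N : nat) (C : {set word N}) (p : R) (i : 'I_N) : R :=
  \sumR_(x in C) \sumR_(E : {set 'I_N})
    (jointw C p x E *
      - log2 (probXY C p i (x i) (obs_wo i x E) / probY C p i (obs_wo i x E)))%R.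

Definition exit_fun (N : nat) (C : {set word N}) (p : R) : R :=
  (/ INR N * \sumR_(i : 'I_N) cond_entropy C p i)%R.

Definition is_glb (S : R -> Prop) (q : R) : Prop :=
  (forall x, S x -> (q <= x)%R) /\
  (forall l, (forall x, S x -> (l <= x)%R) -> (l <= q)%R).
Definition infR (S : R -> Prop) : R := epsilon (inhabits 0%R) (is_glb S).

Definition exit_threshold (N : nat) (C : {set word N}) (t : R) : R :=
  infR (fun p => (0 <= p <= 1)%R /\ (t <= exit_fun C p)%R).

Definition capacity_achieving (N : nat -> nat) (C : forall n, {set word (N n)}) (r : R)
  : Prop :=
  forall p, (0 <= p < 1 - r)%R -> Un_cv (fun n => Pb (C n) p) 0%R.

Definition exit_step (N : nat -> nat) (C : forall n, {set word (N n)}) (r : R) : Prop :=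
  (forall p, (0 <= p < 1 - r)%R -> Un_cv (fun n => exit_fun (C n) p) 0%R) /\
  (forall p, (1 - r < p <= 1)%R -> Un_cv (fun n => exit_fun (C n) p) 1%R).

Definition exit_sharp (N : nat -> nat) (C : forall n, {set word (N n)}) : Prop :=
  forall eps, (0 < eps <= 1 / 2)%R ->
    Un_cv (fun n => exit_threshold (C n) (1 - eps) - exit_threshold (C n) eps)%R 0%R.

(* Main.v *)
Require Import Defs.
From mathcomp Require Import all_boot.
From Stdlib Require Import Reals.
From HB Require Import structures.
From Stdlib Require Import Lra Classical ClassicalEpsilon.

Set Implicit Arguments.
Unset Strict Implicit.
Unset Printing Implicit Defensive.

Local Open Scope R_scope.



HB.instance Definition _ := Monoid.isComLaw.Build R 0 Rplus (fun x y z => esym (Rplus_assoc x y z)) Rplus_comm Rplus_0_l.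
HB.instance Definition _ := Monoid.isComLaw.Build R 1 Rmult (fun x y z => esym (Rmult_assoc x y z)) Rmult_comm Rmult_1_l.
HB.instance Definition _ := Monoid.isMulLaw.Build R 0 Rmult Rmult_0_l Rmult_0_r.
HB.instance Definition _ := Monoid.isAddLaw.Build R Rmult Rplus Rmult_plus_distr_r Rmult_plus_distr_l.

Lemma sumR_le (I : Type) (s : seq I) (P : pred I) (F G : I -> R) :
  (forall i, P i -> F i <= G i) ->
  \big[Rplus/0]_(i <- s | P i) F i <= \big[Rplus/0]_(i <- s | P i) G i.
Proof.
move=> H; apply: (big_ind2 (fun a b => a <= b)) => //; first lra.
move=> a b c d; lra.
Qed.

Lemma sumR_ge0 (I : Type) (s : seq I) (P : pred I) (F : I -> R) :
  (forall i, P i -> 0 <= F i) -> 0 <= \big[Rplus/0]_(i <- s | P i) F i.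
Proof.
move=> H; apply: (big_ind (fun a => 0 <= a)) => //; first lra.
move=> a b; lra.
Qed.

Lemma sumR_const (T : finType) (A : {pred T}) (a : R) :
  \big[Rplus/0]_(i in A) a = INR #|A| * a.
Proof.
rewrite big_const; elim: #|A| => [|n IH]; first (simpl; lra).
change (a + iter n (Rplus a) 0 = INR n.+1 * a); rewrite IH S_INR; lra.
Qed.

Lemma sumR_distr (I : Type) (s : seq I) (P : pred I) (F : I -> R) (a : R) :
  \big[Rplus/0]_(i <- s | P i) (a * F i) = a * \big[Rplus/0]_(i <- s | P i) F i.
Proof. by rewrite big_distrr. Qed.

Lemma sumR_indR (T : finType) (A : {pred T}) (P : pred T) :
  \big[Rplus/0]_(i in A) indR (P i) = INR #|[set i in A | P i]|.
Proof.
rewrite (bigID P) /= [X in _ + X]big1; last by move=> i /andP[_ /negbTE ->].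
rewrite Rplus_0_r (eq_bigr (fun _ => 1)); last by move=> i /andP[_ ->].
rewrite -(@eq_bigl _ _ _ _ _ (fun i => i \in [set i in A | P i])) ?sumR_const ?Rmult_1_r //.
by move=> i; rewrite inE.
Qed.

Lemma sumR_ge_term (T : finType) (F : T -> R) (j : T) :
  (forall i, 0 <= F i) -> F j <= \big[Rplus/0]_(i : T) F i.
Proof.
move=> H; rewrite (bigD1 j) //=.
have := @sumR_ge0 _ (index_enum T) (fun i => i != j) F (fun i _ => H i); lra.
Qed.

Lemma split_sum (n : nat) (i : 'I_n) (phi : {set 'I_n} -> R) :
  \big[Rplus/0]_(E : {set 'I_n}) phi E =
  \big[Rplus/0]_(E : {set 'I_n} | i \notin E) (phi E + phi (i |: E)).
Proof.
rewrite big_split /= [LHS](bigID (fun E : {set 'I_n} => i \notin E)) /=; congr (_ + _).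
rewrite (reindex_onto (fun E : {set 'I_n} => i |: E) (fun E : {set 'I_n} => E :\ i)) /=.
  apply: eq_bigl => E; rewrite in_setU1 eqxx /=.
  apply/eqP/idP => [<-|Hi]; first by rewrite setD11.
  by rewrite setU1K.
by move=> E; rewrite negbK => Hi; rewrite setD1K.
Qed.



Lemma dpl_ext (f g : R -> R) x l l' :
  derivable_pt_lim f x l -> l = l' -> (forall y, f y = g y) -> derivable_pt_lim g x l'.
Proof.
move=> H <- Hfg eps Heps; have [d Hd] := H eps Heps; exists d => h h0 hd.
rewrite -!Hfg; exact: Hd.
Qed.

Lemma dpl_sum (I : Type) (s : seq I) (P : pred I) (F : I -> R -> R) (F' : I -> R) x :
  (forall i, P i -> derivable_pt_lim (F i) x (F' i)) ->
  derivable_pt_lim (fun y => \big[Rplus/0]_(i <- s | P i) F i y) x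
                   (\big[Rplus/0]_(i <- s | P i) F' i).
Proof.
move=> H; elim: s => [|a s IH].
  apply: (dpl_ext (derivable_pt_lim_const 0 x)) => [|y]; by rewrite big_nil.
case Pa: (P a).
  apply: (dpl_ext (derivable_pt_lim_plus _ _ _ _ _ (H a Pa) IH)) => [|y];
    by rewrite big_cons Pa.
apply: (dpl_ext IH) => [|y]; by rewrite big_cons Pa.
Qed.

Lemma dpl_pow1m (m : nat) (x : R) :
  derivable_pt_lim (fun y : R => (1 - y) ^ m) x (- (INR m * (1 - x) ^ Nat.pred m)).
Proof.
have H1 : derivable_pt_lim (fun y : R => 1 - y) x (-1).
  apply: (dpl_ext (derivable_pt_lim_minus _ _ _ _ _ (derivable_pt_lim_const 1 x)
            (derivable_pt_lim_id x))) => [|y]; rewrite /minus_fct /fct_cte /id /=; lra.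
apply: (dpl_ext (derivable_pt_lim_comp _ _ _ _ _ H1 (derivable_pt_lim_pow _ m))) => [|y]; rewrite /comp //.
lra.
Qed.

Definition wt (N : nat) (p : R) (E : {set 'I_N}) : R :=
  p ^ #|E| * (1 - p) ^ (N - #|E|).-1.

Definition dep (N : nat) (x : R) (E : {set 'I_N}) : R :=
  INR #|E| * x ^ Nat.pred #|E| * (1 - x) ^ (N - #|E|) -
  INR (N - #|E|) * (x ^ #|E| * (1 - x) ^ Nat.pred (N - #|E|)).

Lemma dpl_ep (N : nat) (E : {set 'I_N}) x :
  derivable_pt_lim (fun p => erasure_prob p E) x (dep x E).
Proof.
apply: (dpl_ext (derivable_pt_lim_mult _ _ _ _ _ (derivable_pt_lim_pow x #|E|)
                 (dpl_pow1m (N - #|E|) x))) => [|y] //.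
rewrite /dep; lra.
Qed.

Lemma sumR_opp (I : Type) (s : seq I) (P : pred I) (F : I -> R) :
  \big[Rplus/0]_(i <- s | P i) (- F i) = - \big[Rplus/0]_(i <- s | P i) F i.
Proof.
rewrite (eq_bigr (fun i => -1 * F i)); last by move=> i _; lra.
rewrite sumR_distr; lra.
Qed.

Lemma sumR_minus (I : Type) (s : seq I) (P : pred I) (F G : I -> R) :
  \big[Rplus/0]_(i <- s | P i) (F i - G i) =
  \big[Rplus/0]_(i <- s | P i) F i - \big[Rplus/0]_(i <- s | P i) G i.
Proof. by rewrite /Rminus big_split /= sumR_opp. Qed.

Lemma sumR_indR_all (T : finType) (P : pred T) :
  \big[Rplus/0]_(i : T) indR (P i) = INR #|[set i | P i]|.
Proof.
rewrite (bigID P) /= [X in _ + X]big1; last by move=> i /negbTE ->.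
rewrite Rplus_0_r (eq_bigr (fun _ => 1)); last by move=> i ->.
rewrite -(@eq_bigl _ _ _ _ _ (fun i => i \in [set i | P i])) ?sumR_const ?Rmult_1_r //.
by move=> i; rewrite inE.
Qed.

Lemma cardR (N : nat) (E : {set 'I_N}) :
  INR #|E| = \big[Rplus/0]_(j : 'I_N) indR (j \in E).
Proof.
rewrite sumR_indR_all; have -> : [set j | j \in E] = E by apply/setP => j; rewrite inE.
done.
Qed.

Lemma cocardR (N : nat) (E : {set 'I_N}) :
  INR (N - #|E|) = \big[Rplus/0]_(j : 'I_N) indR (j \notin E).
Proof.
rewrite sumR_indR_all; congr INR.
have -> : [set j | j \notin E] = ~: E by apply/setP => j; rewrite !inE.
have H := cardsC E; rewrite card_ord in H.
apply/eqP; rewrite -(eqn_add2l #|E|) H subnKC //.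
by have := max_card (mem E); rewrite card_ord.
Qed.

Lemma russo (N : nat) (f : {set 'I_N} -> R) x :
  derivable_pt_lim (fun p => \big[Rplus/0]_(E : {set 'I_N}) (erasure_prob p E * f E)) x
    (\big[Rplus/0]_(j : 'I_N) \big[Rplus/0]_(E : {set 'I_N} | j \notin E)
        (wt x E * (f (j |: E) - f E))).
Proof.
apply: (dpl_ext (dpl_sum _ (fun E _ => derivable_pt_lim_mult _ _ _ _ _ (dpl_ep E x)
                   (derivable_pt_lim_const (f E) x)))) => [|y] //.
rewrite (eq_bigr (fun E : {set 'I_N} => f E * (INR #|E| * x ^ Nat.pred #|E| * (1 - x) ^ (N - #|E|)) -
        f E * (INR (N - #|E|) * (x ^ #|E| * (1 - x) ^ Nat.pred (N - #|E|))))); last first.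
  by move=> E _; rewrite /dep /fct_cte; lra.
rewrite sumR_minus.
rewrite (eq_bigr (fun j => \big[Rplus/0]_(E : {set 'I_N} | j \notin E) (wt x E * f (j |: E)) -
   \big[Rplus/0]_(E : {set 'I_N} | j \notin E) (wt x E * f E))); last first.
  by move=> j _; rewrite -sumR_minus; apply: eq_bigr => E _; rewrite Rmult_minus_distr_l.
rewrite sumR_minus; congr (_ - _).
- rewrite (eq_bigr (fun E : {set 'I_N} => \big[Rplus/0]_(j : 'I_N)
     (indR (j \in E) * (f E * x ^ Nat.pred #|E| * (1 - x) ^ (N - #|E|))))); last first.
    by move=> E _; rewrite -big_distrl /= -cardR -!Rmult_assoc (Rmult_comm (f E)).
  rewrite exchange_big /=; apply: eq_bigr => j _.
  rewrite (split_sum j); apply: eq_bigr => E HjE.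
  rewrite (negbTE HjE) setU11 /indR cardsU1 HjE /= /wt.
  have HN : (#|E| < N)%nat by have := max_card (j |: E); rewrite cardsU1 HjE card_ord.
  have -> : (N - #|E|.+1 = (N - #|E|).-1)%nat by rewrite subnS.
  by rewrite Rmult_0_l Rplus_0_l Rmult_1_l add0n [RHS]Rmult_comm Rmult_assoc.
- rewrite (eq_bigr (fun E : {set 'I_N} => \big[Rplus/0]_(j : 'I_N)
     (indR (j \notin E) * (f E * (x ^ #|E| * (1 - x) ^ Nat.pred (N - #|E|)))))); last first.
    by move=> E _; rewrite -big_distrl /= -cocardR -!Rmult_assoc (Rmult_comm (f E)).
  rewrite exchange_big /=; apply: eq_bigr => j _.
  rewrite (split_sum j); apply: eq_bigr => E HjE.
  rewrite HjE setU11 /indR /wt /=; lra.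
Qed.

Local Close Scope R_scope.


Section Code.
Variable N : nat.
Variable C : {set word N}.
Hypothesis HC : is_binary_linear_code C.

Definition supp (F : {set 'I_N}) (d : word N) : bool :=
  [forall j, (j \notin F) ==> (d j == false)].
Definition S (F : {set 'I_N}) : {set word N} := [set d in C | supp F d].
Definition nd (i : 'I_N) (F : {set 'I_N}) : bool := [exists d in C, supp F d && d i].
Definition g (F : {set 'I_N}) : nat := trunc_log 2 #|S F|.

Lemma xorwE (u v : word N) j : xorw u v j = xorb (u j) (v j).
Proof. by rewrite ffunE. Qed.

Lemma xorwKl (u v : word N) : xorw u (xorw u v) = v.
Proof. by apply/ffunP => j; rewrite !xorwE; case: (u j); case: (v j). Qed.

Lemma xorwC (u v : word N) : xorw u v = xorw v u.
Proof. by apply/ffunP => j; rewrite !xorwE; case: (u j); case: (v j). Qed.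

Lemma xorw_in (u v : word N) : u \in C -> v \in C -> xorw u v \in C.
Proof. by case: HC => _; apply. Qed.

Lemma zerow_in : zerow N \in C.
Proof. by case: HC. Qed.

Lemma suppP (F : {set 'I_N}) (d : word N) : reflect (forall j, j \notin F -> d j = false) (supp F d).
Proof.
apply: (iffP forallP) => H j.
  by move=> Hj; have /implyP/(_ Hj)/eqP := H j.
by apply/implyP => Hj; rewrite H.
Qed.

Lemma card_split (i : 'I_N) (F : {set 'I_N}) : i \in F ->
  #|S F| = muln (if nd i F then 2 else 1) #|S (F :\ i)|.
Proof.
move=> HiF.
have HD : S F :\: [set d : word N | d i] = S (F :\ i).
  apply/setP => d; rewrite !inE; apply/idP/idP.
    case/andP => ndi /andP[dC /suppP sd]; rewrite dC /=; apply/suppP => j.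
    rewrite in_setD1 negb_and negbK; case/orP => [/eqP -> | ]; first exact: negbTE.
    exact: sd.
  case/andP => dC /suppP sd; have di : d i = false by apply: sd; rewrite in_setD1 eqxx.
  rewrite di dC /=; apply/suppP => j HjF; apply: sd; rewrite in_setD1 negb_and HjF orbT //.
rewrite -(cardsID [set d : word N | d i] (S F)) HD.
case: ifP => Hnd.
- case/existsP: Hnd => d0 /andP[d0C /andP[sd0 d0i]].
  have -> : S F :&: [set d : word N | d i] = (xorw d0) @: S (F :\ i).
    apply/setP => d; apply/idP/imsetP.
      rewrite !inE => /andP[/andP[dC /suppP sd] di].
      exists (xorw d0 d); last by rewrite xorwKl.
      rewrite !inE xorw_in //=; apply/suppP => j; rewrite in_setD1 negb_and negbK.
      case/orP => [/eqP -> | Hj]; first by rewrite xorwE d0i di.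
      by rewrite xorwE (suppP _ _ sd0 j Hj) (sd j Hj).
    case=> e; rewrite !inE => /andP[eC /suppP se] ->.
    rewrite xorw_in //= xorwE d0i (se i); last by rewrite in_setD1 eqxx.
    rewrite andbT; apply/suppP => j Hj; rewrite xorwE (suppP _ _ sd0 j Hj) se //.
    by rewrite in_setD1 negb_and Hj orbT.
  rewrite card_imset; last exact: (can_inj (@xorwKl d0)).
  by rewrite mul2n addnn.
- have -> : S F :&: [set d : word N | d i] = set0.
    apply/setP => d; rewrite !inE; apply/negbTE; apply/negP => /andP[/andP[dC sd] di].
    by move/negbT: Hnd => /existsP; apply; exists d; rewrite dC sd di.
  by rewrite cards0 add0n mul1n.
Qed.

Lemma S_pow2 (F : {set 'I_N}) : #|S F| = expn 2 (g F).
Proof.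
suff [k Hk] : exists k, #|S F| = expn 2 k by rewrite /g Hk trunc_expnK.
move Hn : #|F| => n; elim: n F Hn => [|n IH] F HF.
  move/eqP: HF; rewrite cards_eq0 => /eqP ->; exists 0%nat.
  have -> : S set0 = [set zerow N].
    apply/setP => d; rewrite !inE; apply/idP/eqP.
      case/andP => _ /suppP sd; apply/ffunP => j; rewrite ffunE; apply: sd; by rewrite inE.
    move=> ->; rewrite zerow_in /=; apply/suppP => j _; by rewrite ffunE.
  by rewrite cards1.
have [i HiF] : exists i, i \in F.
  apply/set0Pn; by rewrite -card_gt0 HF.
have HF' : #|F :\ i| = n by move: HF; rewrite (cardsD1 i F) HiF add1n => -[].
have [k Hk] := IH (F :\ i) HF'.
rewrite (card_split HiF) Hk; case: (nd i F); first by exists k.+1; rewrite expnS.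
by exists k; rewrite mul1n.
Qed.

Lemma g_incr (i : 'I_N) (E : {set 'I_N}) : i \notin E -> g (i |: E) = addn (nd i (i |: E)) (g E).
Proof.
move=> HiE; have := card_split (setU11 i E); rewrite setU1K //.
rewrite !S_pow2; case: (nd i _) => /=.
  by rewrite -expnS => /eqP; rewrite eqn_exp2l // => /eqP.
by rewrite mul1n => /eqP; rewrite eqn_exp2l // => /eqP.
Qed.

Lemma S_set0 : S set0 = [set zerow N].
Proof.
apply/setP => d; rewrite !inE; apply/idP/eqP.
  case/andP => _ /suppP sd; apply/ffunP => j; rewrite ffunE; apply: sd; by rewrite inE.
move=> ->; rewrite zerow_in /=; apply/suppP => j _; by rewrite ffunE.
Qed.

Lemma g_set0 : g set0 = 0%nat.
Proof. by rewrite /g S_set0 cards1. Qed.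

Lemma S_setT : S setT = C.
Proof. apply/setP => d; rewrite !inE; apply/andb_idr => _; apply/suppP => j; by rewrite inE. Qed.

Lemma g_setT : g setT = code_dim C.
Proof. by rewrite /g S_setT. Qed.

Lemma nd_mono (i : 'I_N) (E F : {set 'I_N}) : E \subset F -> nd i E -> nd i F.
Proof.
move=> sEF /existsP[d /andP[dC /andP[/suppP sd di]]]; apply/existsP; exists d.
rewrite dC di andbT /=; apply/suppP => j Hj; apply: sd; apply: contra Hj; exact: (subsetP sEF).
Qed.

Lemma nd_in (i : 'I_N) (E : {set 'I_N}) : nd i E -> i \in E.
Proof.
case/existsP => d /andP[_ /andP[/suppP sd di]]; apply/negPn/negP => Hi.
by rewrite sd in di.
Qed.

End Code.

Local Open Scope R_scope.



Section Prob.
Variable N : nat.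
Variable C : {set word N}.
Hypothesis HC : is_binary_linear_code C.

Lemma indR_andb a b : indR (a && b) = indR a * indR b.
Proof. by case: a; case: b; rewrite /indR /=; lra. Qed.

Lemma card_C_pos : (0 < #|C|)%nat.
Proof. by apply/card_gt0P; exists (zerow N); apply: zerow_in. Qed.

Lemma INR_C_pos : 0 < INR #|C|.
Proof. apply: lt_0_INR; apply/ltP; exact: card_C_pos. Qed.

Lemma ep_ge0 p (E : {set 'I_N}) : 0 <= p <= 1 -> 0 <= erasure_prob p E.
Proof.
move=> Hp; rewrite /erasure_prob; apply: Rmult_le_pos; apply: pow_le; lra.
Qed.

Lemma sum_over_C (T : R) :
  \big[Rplus/0]_(x in C) (/ INR #|C| * T) = T.
Proof.
rewrite sumR_const -Rmult_assoc Rinv_r ?Rmult_1_l //.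
by have := INR_C_pos; lra.
Qed.

Lemma ind_bit (x : word N) (E : {set 'I_N}) (i : 'I_N) : x \in C ->
  [exists c in C, [forall j, (j \notin E) ==> (c j == x j)] && (c i != x i)] = nd C i E.
Proof.
move=> xC; apply/existsP/existsP => -[d /andP[dC H]].
  case/andP: H => /forallP H di; exists (xorw x d).
  rewrite xorw_in //=; apply/andP; split.
    apply/suppP => j Hj; have /implyP/(_ Hj)/eqP := H j.
    by rewrite xorwE => ->; case: (x j).
  by rewrite xorwE; move: di; case: (x i); case: (d i).
case/andP: H => /suppP sd di; exists (xorw x d); rewrite xorw_in //=.
apply/andP; split; last by rewrite xorwE di; case: (x i).
apply/forallP => j; apply/implyP => Hj; by rewrite xorwE (sd j Hj); case: (x j).
Qed.

Lemma bit_erasure_eq p (i : 'I_N) :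
  bit_erasure_prob C p i =
  \big[Rplus/0]_(E : {set 'I_N}) (erasure_prob p E * indR (nd C i E)).
Proof.
rewrite /bit_erasure_prob -[RHS]sum_over_C; apply: eq_bigr => x xC.
rewrite -sumR_distr; apply: eq_bigr => E _.
by rewrite /jointw ind_bit // Rmult_assoc.
Qed.

Lemma obs_eq (i : 'I_N) (x x' : word N) (E E' : {set 'I_N}) :
  (obs_wo i x' E' == obs_wo i x E) =
  (i |: E' == i |: E) && supp (i |: E) (xorw x x').
Proof.
apply/eqP/andP => [H | [/eqP HE /suppP sd]].
  split.
    apply/eqP/setP => j; have := congr1 (fun f : {ffun 'I_N -> option bool} => f j) H; rewrite !ffunE !in_setU1.
    by case: (j == i); case: (j \in E'); case: (j \in E).
  apply/suppP => j; rewrite in_setU1 negb_or => /andP[nji njE].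
  have := congr1 (fun f : {ffun 'I_N -> option bool} => f j) H; rewrite !ffunE (negbTE nji) (negbTE njE) /=.
  case: (j \in E') => //= -[] ->; by case: (x j).
apply/ffunP => j; rewrite !ffunE.
have -> : (j == i) || (j \in E') = (j \in i |: E') by rewrite in_setU1.
have -> : (j == i) || (j \in E) = (j \in i |: E) by rewrite in_setU1.
rewrite HE; case Hj: (j \in i |: E) => //; have := sd j (negbT Hj).
rewrite xorwE; by case: (x j); case: (x' j) => // _.
Qed.

Lemma factor_sum (c : R) (e : {set 'I_N} -> R) (a : {set 'I_N} -> bool) (B : word N -> bool) :
  \big[Rplus/0]_(x' in C) \big[Rplus/0]_(E' : {set 'I_N}) (c * e E' * indR (a E' && B x')) =
  c * \big[Rplus/0]_(x' in C) indR (B x') *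
      \big[Rplus/0]_(E' : {set 'I_N}) (e E' * indR (a E')).
Proof.
rewrite -sumR_distr big_distrl /=; apply: eq_bigr => x' _.
rewrite -sumR_distr; apply: eq_bigr => E' _; rewrite indR_andb.
move: (indR (a E')) (indR (B x')) => u v; ring.
Qed.

Lemma card_xor (x : word N) (P : pred (word N)) : x \in C ->
  #|[set x' in C | P (xorw x x')]| = #|[set d in C | P d]|.
Proof.
move=> xC; have -> : [set x' in C | P (xorw x x')] = (xorw x) @: [set d in C | P d].
  apply/setP => y; apply/idP/imsetP.
    rewrite inE => /andP[yC Py]; exists (xorw x y); last by rewrite xorwKl.
    by rewrite inE xorw_in.
  case=> d; rewrite !inE => /andP[dC Pd] ->; rewrite xorwKl Pd andbT xorw_in //.
by rewrite card_imset //; apply: (can_inj (@xorwKl _ x)).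
Qed.

Lemma S_Di (i : 'I_N) (F : {set 'I_N}) : i \in F ->
  [set d in C | supp F d && (d i == false)] = S C (F :\ i).
Proof.
move=> HiF; apply/setP => d; rewrite !inE; apply/idP/idP.
  case/andP => dC /andP[/suppP sd /eqP di]; rewrite dC /=; apply/suppP => j.
  rewrite in_setD1 negb_and negbK; case/orP => [/eqP -> // | ]; exact: sd.
case/andP => dC /suppP sd; have di : d i = false by apply: sd; rewrite in_setD1 eqxx.
rewrite dC di eqxx andbT /=; apply/suppP => j HjF; apply: sd; by rewrite in_setD1 negb_and HjF orbT.
Qed.

Lemma log2_1 : - log2 1 = 0.
Proof. rewrite /log2 ln_1 /Rdiv Rmult_0_l; lra. Qed.

Lemma log2_half : - log2 (/ 2) = 1.
Proof.
have H := ln_lt_2; rewrite /log2 ln_Rinv; last lra.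
field; lra.
Qed.

Lemma entropy_term p (i : 'I_N) (x : word N) (E : {set 'I_N}) :
  0 <= p <= 1 -> x \in C -> erasure_prob p E <> 0 ->
  - log2 (probXY C p i (x i) (obs_wo i x E) / probY C p i (obs_wo i x E)) =
  indR (nd C i (i |: E)).
Proof.
move=> Hp xC Hep; set F := i |: E.
set W := \big[Rplus/0]_(E' : {set 'I_N}) (erasure_prob p E' * indR (i |: E' == F)).
have HW : 0 < W.
  have : erasure_prob p E * indR (i |: E == F) <= W.
    rewrite /W; apply: (@sumR_ge_term _ (fun E' : {set 'I_N} => erasure_prob p E' * indR (i |: E' == F))) => E'.
    apply: Rmult_le_pos; first exact: ep_ge0.
    rewrite /indR; case: (_ == _); lra.
  rewrite eqxx /indR Rmult_1_r; have := ep_ge0 E Hp; lra.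
have HY : probY C p i (obs_wo i x E) =
   / INR #|C| * INR #|S C F| * W.
  rewrite /probY /jointw.
  rewrite (eq_bigr (fun x' : word N => \big[Rplus/0]_(E' : {set 'I_N})
     (/ INR #|C| * erasure_prob p E' * indR ((i |: E' == F) && supp F (xorw x x'))))).
    by rewrite factor_sum sumR_indR card_xor.
  move=> x' _; apply: eq_bigr => E' _; by rewrite obs_eq.
have HXY : probXY C p i (x i) (obs_wo i x E) =
   / INR #|C| * INR #|S C (F :\ i)| * W.
  rewrite /probXY /jointw.
  rewrite (eq_bigr (fun x' : word N => \big[Rplus/0]_(E' : {set 'I_N})
     (/ INR #|C| * erasure_prob p E' * indR ((i |: E' == F) &&
        (supp F (xorw x x') && (xorw x x' i == false)))))).
    rewrite factor_sum sumR_indR (card_xor (fun d => supp F d && (d i == false))) //.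
    by rewrite S_Di // setU11.
  move=> x' _; apply: eq_bigr => E' _; rewrite obs_eq -andbA.
  have -> : (xorw x x' i == false) = (x' i == x i) by rewrite xorwE; case: (x i); case: (x' i).
  done.
rewrite HY HXY (card_split HC (setU11 i E)) -/F.
have HS : (0 < #|S C (F :\ i)|)%nat by rewrite (S_pow2 HC) expn_gt0.
have HSR : 0 < INR #|S C (F :\ i)| by apply: lt_0_INR; apply/ltP.
have HCR := INR_C_pos.
case: (nd C i F); rewrite mult_INR /indR /=.
  rewrite -[RHS]log2_half; congr (- log2 _).
  move: (INR #|S C (F :\ i)|) HSR => s Hs; move: (INR #|C|) HCR => c Hc; clear HY HXY; move: W HW => w Hw.
  field; repeat split; lra.
rewrite -[RHS]log2_1; congr (- log2 _).
move: (INR #|S C (F :\ i)|) HSR => s Hs; move: (INR #|C|) HCR => c Hc; clear HY HXY; move: W HW => w Hw.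
field; repeat split; lra.
Qed.

Lemma cond_entropy_eq p (i : 'I_N) : 0 <= p <= 1 ->
  cond_entropy C p i =
  \big[Rplus/0]_(E : {set 'I_N}) (erasure_prob p E * indR (nd C i (i |: E))).
Proof.
move=> Hp; rewrite /cond_entropy -[RHS]sum_over_C; apply: eq_bigr => x xC.
rewrite -sumR_distr; apply: eq_bigr => E _; rewrite /jointw.
have [->|Hep] := Req_dec (erasure_prob p E) 0; first by ring.
by rewrite entropy_term // Rmult_assoc.
Qed.

End Prob.



Section Analytic.
Variable N : nat.
Variable C : {set word N}.
Hypothesis HC : is_binary_linear_code C.
Hypothesis HN0 : (0 < N)%nat.

Lemma INR_N_pos : 0 < INR N.
Proof. by apply: lt_0_INR; apply/ltP. Qed.

Definition hh (p : R) : R :=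
  / INR N * \big[Rplus/0]_(i : 'I_N) \big[Rplus/0]_(E : {set 'I_N})
     (erasure_prob p E * indR (nd C i (i |: E))).

Lemma exit_hh p : 0 <= p <= 1 -> exit_fun C p = hh p.
Proof.
move=> Hp; rewrite /exit_fun /hh; congr (_ * _); apply: eq_bigr => i _.
exact: cond_entropy_eq.
Qed.

Lemma card_lt_notin (i : 'I_N) (E : {set 'I_N}) : i \notin E -> (#|E| < N)%nat.
Proof. by move=> HiE; have := max_card (i |: E); rewrite cardsU1 HiE card_ord. Qed.

Lemma ep_split p (i : 'I_N) (E : {set 'I_N}) : i \notin E ->
  erasure_prob p E + erasure_prob p (i |: E) = wt p E.
Proof.
move=> HiE; have HN := card_lt_notin HiE.
rewrite /erasure_prob /wt cardsU1 HiE add1n subnS.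
have -> : (N - #|E| = (N - #|E|).-1.+1)%nat by rewrite prednK // subn_gt0.
rewrite /=; move: (p ^ #|E|) ((1 - p) ^ (N - #|E|).-1) => a b; ring.
Qed.

Lemma hh_wt p : hh p = / INR N * \big[Rplus/0]_(i : 'I_N)
   \big[Rplus/0]_(E : {set 'I_N} | i \notin E) (wt p E * indR (nd C i (i |: E))).
Proof.
rewrite /hh; congr (_ * _); apply: eq_bigr => i _; rewrite (split_sum i).
apply: eq_bigr => E HiE; by rewrite setUA setUid -(ep_split p HiE) Rmult_plus_distr_r.
Qed.

Definition Gs (p : R) : R :=
  / INR N * \big[Rplus/0]_(E : {set 'I_N}) (erasure_prob p E * INR (g C E)).

Lemma Gs_deriv x : derivable_pt_lim Gs x (hh x).
Proof.
have H := russo (fun E => INR (g C E)) x.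
have H2 := derivable_pt_lim_scal _ (/ INR N) _ _ H.
apply: (dpl_ext H2) => [|y] //.
rewrite hh_wt; congr (_ * _); apply: eq_bigr => j _; apply: eq_bigr => E HjE.
by rewrite (g_incr HC HjE) plus_INR /indR; case: (nd C j _) => /=; ring.
Qed.

Definition phi (E : {set 'I_N}) : R :=
  / INR N * \big[Rplus/0]_(i : 'I_N) indR (nd C i (i |: E)).

Lemma hh_phi p : hh p = \big[Rplus/0]_(E : {set 'I_N}) (erasure_prob p E * phi E).
Proof.
rewrite /hh /phi exchange_big /= -sumR_distr.
apply: eq_bigr => E _; rewrite sumR_distr.
move: (\big[Rplus/0]_(i : 'I_N) indR (nd C i (i |: E))) => s; ring.
Qed.

Lemma phi_mono (E F : {set 'I_N}) : E \subset F -> phi E <= phi F.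
Proof.
move=> sEF; rewrite /phi; apply: Rmult_le_compat_l.
  by have := INR_N_pos; move=> H; left; apply: Rinv_0_lt_compat.
apply: sumR_le => i _; rewrite /indR.
case: ifP => H1; case: ifP => H2; try lra.
by rewrite (@nd_mono _ C i (i |: E) (i |: F)) in H2 => //; apply: setUS.
Qed.

Lemma wt_ge0 p (E : {set 'I_N}) : 0 <= p <= 1 -> 0 <= wt p E.
Proof. move=> Hp; rewrite /wt; apply: Rmult_le_pos; apply: pow_le; lra. Qed.

Definition hh' (x : R) : R :=
  \big[Rplus/0]_(j : 'I_N) \big[Rplus/0]_(E : {set 'I_N} | j \notin E)
        (wt x E * (phi (j |: E) - phi E)).

Lemma hh_deriv x : derivable_pt_lim hh x (hh' x).
Proof.
apply: (dpl_ext (russo phi x)) => // y; by rewrite hh_phi.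
Qed.

Lemma hh'_ge0 x : 0 <= x <= 1 -> 0 <= hh' x.
Proof.
move=> Hx; apply: sumR_ge0 => j _; apply: sumR_ge0 => E _.
apply: Rmult_le_pos; first exact: wt_ge0.
have := phi_mono (subsetUr [set j] E); lra.
Qed.

Lemma hh_mono a b : 0 <= a -> a <= b -> b <= 1 -> hh a <= hh b.
Proof.
move=> Ha Hab Hb; case: (Rle_lt_or_eq_dec _ _ Hab) => [Hlt|->]; last lra.
have [c [Hc Hcab]] := MVT_cor2 hh hh' a b Hlt (fun c _ => hh_deriv c).
have := hh'_ge0 (conj (Rlt_le _ _ (Rle_lt_trans _ _ _ Ha (proj1 Hcab)))
                      (Rlt_le _ _ (Rlt_le_trans _ _ _ (proj2 Hcab) Hb))).
move=> H; have : 0 <= hh' c * (b - a) by apply: Rmult_le_pos; lra.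
lra.
Qed.

Lemma G_bounds a b : 0 <= a -> a <= b -> b <= 1 ->
  (b - a) * hh a <= Gs b - Gs a <= (b - a) * hh b.
Proof.
move=> Ha Hab Hb; case: (Rle_lt_or_eq_dec _ _ Hab) => [Hlt|->]; last (split; lra).
have [c [Hc Hcab]] := MVT_cor2 Gs hh a b Hlt (fun c _ => Gs_deriv c).
have H1 := hh_mono Ha (Rlt_le _ _ (proj1 Hcab)) (Rle_trans _ _ _ (Rlt_le _ _ (proj2 Hcab)) Hb).
have H2 := hh_mono (Rle_trans _ _ _ Ha (Rlt_le _ _ (proj1 Hcab))) (Rlt_le _ _ (proj2 Hcab)) Hb.
rewrite Hc; have Hba : 0 <= b - a by lra.
split; nra.
Qed.

Lemma ev0 (f : {set 'I_N} -> R) :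
  \big[Rplus/0]_(E : {set 'I_N}) (erasure_prob 0 E * f E) = f set0.
Proof.
rewrite (bigD1 set0) //= big1 ?Rplus_0_r.
  by rewrite /erasure_prob cards0 /= Rminus_0_r pow1; ring.
move=> E HE; rewrite /erasure_prob pow_i ?Rmult_0_l //.
by apply/ltP; rewrite card_gt0.
Qed.

Lemma ev1 (f : {set 'I_N} -> R) :
  \big[Rplus/0]_(E : {set 'I_N}) (erasure_prob 1 E * f E) = f setT.
Proof.
rewrite (bigD1 setT) //= big1 ?Rplus_0_r.
  by rewrite /erasure_prob cardsT card_ord subnn pow1 /=; ring.
move=> E HE; rewrite /erasure_prob.
have : (#|E| < N)%nat.
  rewrite ltn_neqAle; have := max_card E; rewrite card_ord => ->; rewrite andbT.
  apply: contra HE => /eqP H; apply/eqP; apply/setP => j; rewrite inE.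
  apply/negPn/negP => Hj; have := card_lt_notin Hj; by rewrite H ltnn.
move=> HE'; have -> : 1 - 1 = 0 by ring.
rewrite pow_i ?Rmult_0_r ?Rmult_0_l //; apply/ltP; by rewrite subn_gt0.
Qed.

Lemma G_ends : Gs 1 - Gs 0 = rate C.
Proof.
rewrite /Gs ev0 ev1 (g_set0 HC) (g_setT C) /rate /=; field.
by have := INR_N_pos; lra.
Qed.

Lemma hh0 : min_dist_ge2 C -> hh 0 = 0.
Proof.
move=> Hmd; rewrite hh_phi ev0 /phi big1 ?Rmult_0_r // => i _.
rewrite setU0 /indR; case: ifP => // /existsP[d /andP[dC /andP[/suppP sd di]]].
exfalso; have dnz : d != zerow N.
  by apply/eqP => Hd; move: di; rewrite Hd ffunE.
have := Hmd d dC dnz; rewrite /weight.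
have -> : [set j | d j] = [set i].
  apply/setP => j; rewrite !inE; apply/idP/eqP => [Hj | ->] //.
  by apply/eqP; apply: contraLR Hj => Hji; rewrite sd // inE.
by rewrite cards1.
Qed.

Lemma hh1 : proper_code C -> hh 1 = 1.
Proof.
move=> Hpr; rewrite hh_phi ev1 /phi.
rewrite (eq_bigr (fun _ => 1)); last first.
  move=> i _; rewrite /indR; suff -> : nd C i (i |: setT) = true by [].
  apply/existsP; have [c cC ci] := Hpr i; exists c; rewrite cC ci andbT /=.
  by apply/suppP => j; rewrite !inE orbT.
rewrite -(@eq_bigl _ _ _ _ _ (fun i => i \in [set: 'I_N])) ?sumR_const; last by move=> i; rewrite inE.
rewrite cardsT card_ord Rmult_1_r Rinv_l //; have := INR_N_pos; lra.
Qed.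

Lemma Pb_eq p : 0 <= p <= 1 -> Pb C p = p * exit_fun C p.
Proof.
move=> Hp; rewrite exit_hh // hh_wt /Pb.
rewrite -Rmult_assoc (Rmult_comm p) Rmult_assoc; congr (_ * _).
rewrite -sumR_distr; apply: eq_bigr => i _.
rewrite bit_erasure_eq // (split_sum i) -sumR_distr; apply: eq_bigr => E HiE.
have -> : nd C i E = false.
  by case Hn: (nd C i E) => //; move: (nd_in Hn); rewrite (negbTE HiE).
rewrite /indR /= Rmult_0_r Rplus_0_l.
rewrite /erasure_prob /wt cardsU1 HiE add1n subnS /=; ring.
Qed.

End Analytic.


Definition ev (P : nat -> Prop) := exists N0, forall n, ge n N0 -> P n.

Lemma ev_and P Q : ev P -> ev Q -> ev (fun n => P n /\ Q n).
Proof.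
move=> [a Ha] [b Hb]; exists (Nat.max a b) => n Hn; split.
  apply: Ha; exact: (Nat.le_trans _ _ _ (Nat.le_max_l a b) Hn).
apply: Hb; exact: (Nat.le_trans _ _ _ (Nat.le_max_r a b) Hn).
Qed.

Lemma ev_mono (P Q : nat -> Prop) : (forall n, P n -> Q n) -> ev P -> ev Q.
Proof. move=> H [a Ha]; exists a => n Hn; apply: H; exact: Ha. Qed.

Lemma ev_true (P : nat -> Prop) : (forall n, P n) -> ev P.
Proof. move=> H; exists 0%nat => n _; exact: H. Qed.

Lemma cv_ev u l eps : Un_cv u l -> 0 < eps -> ev (fun n => l - eps < u n < l + eps).
Proof.
move=> H He; have [N0 HN] := H eps He; exists N0 => n Hn.
have := HN n Hn; rewrite /Rdist => /Rabs_def2; lra.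
Qed.

Lemma ev_cv u l : (forall eps, 0 < eps -> ev (fun n => l - eps < u n < l + eps)) -> Un_cv u l.
Proof.
move=> H eps He; have [N0 HN] := H eps He; exists N0 => n Hn.
rewrite /Rdist; apply: Rabs_def1; have := HN n Hn; lra.
Qed.

Lemma glb_exists (S : R -> Prop) : S 1 -> (forall p, S p -> 0 <= p) -> exists q, is_glb S q.
Proof.
move=> S1 Slb.
have Hb : bound (fun x => S (- x)).
  exists 0 => x Hx; have := Slb _ Hx; lra.
have Hne : exists x, S (- x) by exists (-1); rewrite Ropp_involutive.
have [m [Hm1 Hm2]] := completeness _ Hb Hne.
exists (- m); split.
  move=> x Sx; have : - x <= m by apply: Hm1; rewrite Ropp_involutive.
  lra.
move=> l Hl; have : m <= - l.
  apply: Hm2 => x Sx; have := Hl _ Sx; lra.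
lra.
Qed.

Section Abstract.
Variables (h G Pbf th : nat -> R -> R) (rn : nat -> R) (r : R).
Hypothesis Hr : 0 < r < 1.
Hypothesis Hrn : Un_cv rn r.
Hypothesis Hmono : forall n a b, 0 <= a -> a <= b -> b <= 1 -> h n a <= h n b.
Hypothesis H0 : forall n, h n 0 = 0.
Hypothesis H1 : forall n, h n 1 = 1.
Hypothesis HG : forall n a b, 0 <= a -> a <= b -> b <= 1 ->
  (b - a) * h n a <= G n b - G n a <= (b - a) * h n b.
Hypothesis HGe : forall n, G n 1 - G n 0 = rn n.
Hypothesis HPb : forall n p, 0 <= p <= 1 -> Pbf n p = p * h n p.
Hypothesis Hth : forall n t, t <= 1 ->
  is_glb (fun p => (0 <= p <= 1) /\ t <= h n p) (th n t).

Lemma hb n p : 0 <= p <= 1 -> 0 <= h n p <= 1.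
Proof.
move=> Hp; have := @Hmono n 0 p (Rle_refl 0) (proj1 Hp) (proj2 Hp).
have := @Hmono n p 1 (proj1 Hp) (proj2 Hp) (Rle_refl 1).
rewrite H0 H1; lra.
Qed.

Definition Lo := forall p, 0 <= p < 1 - r -> Un_cv (fun n => h n p) 0.
Definition Up := forall p, 1 - r < p <= 1 -> Un_cv (fun n => h n p) 1.
Definition S1 := forall p, 0 <= p < 1 - r -> Un_cv (fun n => Pbf n p) 0.
Definition S3 := forall eps, 0 < eps <= 1 / 2 ->
  Un_cv (fun n => th n (1 - eps) - th n eps) 0.

Lemma S1_Lo : S1 -> Lo.
Proof.
move=> HS p Hp; apply: ev_cv => eps He.
have Hp1 : 0 <= p <= 1 by lra.
case: (Rle_lt_or_eq_dec 0 p (proj1 Hp)) => [Hp0|<-]; last first.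
  by apply: ev_true => n; rewrite H0; lra.
move: (cv_ev (HS p Hp) (Rmult_lt_0_compat _ _ He Hp0)); apply: ev_mono => n.
rewrite HPb // => Hn; have := hb n Hp1 => Hb.
split; first lra.
apply: (Rmult_lt_reg_l p) => //; lra.
Qed.

Lemma Lo_S1 : Lo -> S1.
Proof.
move=> HL p Hp; apply: ev_cv => eps He.
have Hp1 : 0 <= p <= 1 by lra.
move: (cv_ev (HL p Hp) He); apply: ev_mono => n Hn.
rewrite HPb //; have := hb n Hp1 => Hb.
have : p * h n p <= h n p.
  have : p * h n p <= 1 * h n p by apply: Rmult_le_compat_r; lra.
  lra.
have : 0 <= p * h n p by apply: Rmult_le_pos; lra.
lra.
Qed.


Lemma th_bounds n t : t <= 1 -> 0 <= th n t <= 1.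
Proof.
move=> Ht; have [Hlb Hgr] := Hth n Ht; split.
  apply: Hgr => x [[Hx _] _] //.
apply: Hlb; split; first lra.
by rewrite H1.
Qed.

Lemma th_le n t p : t <= 1 -> 0 <= p <= 1 -> t <= h n p -> th n t <= p.
Proof. move=> Ht Hp Htp; have [Hlb _] := Hth n Ht; exact: Hlb. Qed.

Lemma th_ge n t a : t <= 1 -> (forall s, 0 <= s <= 1 -> t <= h n s -> a <= s) -> a <= th n t.
Proof. move=> Ht H; have [_ Hgr] := Hth n Ht; apply: Hgr => s [Hs Hts]; exact: H. Qed.

Lemma th_above n t p : t <= 1 -> th n t < p -> p <= 1 -> t <= h n p.
Proof.
move=> Ht Hlt Hp1.
case: (classic (exists s, (0 <= s <= 1 /\ t <= h n s) /\ s < p)) => [[s [[Hs Hts] Hsp]]|Hn].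
  apply: (Rle_trans _ _ _ Hts); apply: Hmono; lra.
have : p <= th n t.
  apply: th_ge => // s Hs Hts; apply: Rnot_lt_le => Hsp; apply: Hn; exists s; exact: (conj (conj Hs Hts) Hsp).
lra.
Qed.

Lemma arith1 c eta d y : (c+eta)*y >= c - 2*(d*c/8) -> (c+eta)*y <= (c+eta)*(1-d) ->
  (c+eta)*(1-d) = c+eta-d*c-d*eta -> eta <= d*c/2 -> 0 < d*c -> d*eta >= 0 -> False.
Proof. intros; lra. Qed.

Lemma Lo_Up : Lo -> Up.
Proof.
move=> HL q Hq; apply: ev_cv => d Hd.
have Hq1 : 0 <= q <= 1 by lra.
case: (Rle_lt_dec d 1) => Hd1; last first.
  by apply: ev_true => n; have := hb n Hq1; lra.
set c := q - (1 - r).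
have Hc : 0 < c by rewrite /c; lra.
set eta := Rmin (d * c / 2) ((1 - r) / 2).
have Hdc : 0 < d * c by apply: Rmult_lt_0_compat.
have Heta1 : eta <= d * c / 2 by apply: Rmin_l.
have Heta2 : eta <= (1 - r) / 2 by apply: Rmin_r.
have Heta0 : 0 < eta by apply: Rmin_glb_lt; lra.
set p := 1 - r - eta.
have Hp : 0 <= p < 1 - r by rewrite /p; lra.
set e := d * c / 8.
have He : 0 < e by rewrite /e; lra.
move: (ev_and (cv_ev (HL p Hp) He) (cv_ev Hrn He)); apply: ev_mono => n [Hh Hr'].
have Hhp := hb n (conj (proj1 Hp) (ltac:(lra) : p <= 1)).
have Hhq := hb n Hq1.
have HA := HG n (proj1 Hp) (ltac:(lra) : p <= q) (proj2 Hq).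
have HB := HG n (ltac:(lra) : 0 <= q) (proj2 Hq) (Rle_refl 1).
have HC := HG n (Rle_refl 0) (proj1 Hp) (ltac:(lra) : p <= 1).
have HE := HGe n. rewrite H1 in HB.
have Hph : p * h n p <= h n p.
  have : p * h n p <= 1 * h n p by apply: Rmult_le_compat_r; lra.
  lra.
have Hqp : (q - p) * h n q >= c - 2 * e.
  have : rn n <= (1 - q) * 1 + (q - p) * h n q + (p - 0) * h n p by lra.
  rewrite Rminus_0_r /c; lra.
have Hqpe : q - p = c + eta by rewrite /c /p; ring.
split; last lra.
apply: Rnot_le_lt => Hle.
have : (q - p) * h n q <= (q - p) * (1 - d) by apply: Rmult_le_compat_l; lra.
rewrite Hqpe.
have : d * eta >= 0 by apply: Rle_ge; apply: Rmult_le_pos; lra.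
rewrite /e in Hqp; rewrite Hqpe in Hqp.
move=> Hde Hx.
have : (c + eta) * (1 - d) = c + eta - d * c - d * eta by ring.
move=> Hexp.
exact: (arith1 Hqp Hx Hexp Heta1 Hdc Hde).
Qed.

Lemma S3_Lo : S3 -> Lo.
Proof.
move=> H3 p Hp; apply: ev_cv => d Hd.
have Hp1 : 0 <= p <= 1 by lra.
set g0 := 1 - p - r.
have Eg0 : g0 = 1 - p - r by [].
have Hg0 : 0 < g0 by rewrite /g0; lra.
set eps := Rmin d (Rmin (1/2) (g0/4)).
have He1 : eps <= d by apply: Rmin_l.
have He2 : eps <= 1/2 by apply: (Rle_trans _ _ _ (Rmin_r _ _)); apply: Rmin_l.
have He3 : eps <= g0/4 by apply: (Rle_trans _ _ _ (Rmin_r _ _)); apply: Rmin_r.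
have He0 : 0 < eps by apply: Rmin_glb_lt => //; apply: Rmin_glb_lt; lra.
have Htau : 0 < g0 / 8 by lra.
have Hg2 : 0 < g0 / 2 by lra.
move: (ev_and (cv_ev (H3 eps (conj He0 He2)) Htau) (cv_ev Hrn Hg2)).
apply: ev_mono => n [Hdiff Hr'].
have Hhp := hb n Hp1.
split; first lra.
apply: Rnot_le_lt => Hle.
have Hthe : th n eps <= p by apply: th_le => //; lra.
set p2 := p + g0 / 4.
have Ep2 : p2 = p + g0 / 4 by [].
have Hp2 : 0 <= p2 <= 1 by rewrite /p2 /g0; lra.
have Hth2 : 1 - eps <= h n p2 by apply: th_above; rewrite /p2; lra.
have HA := HG n (proj1 Hp2) (proj2 Hp2) (Rle_refl 1).
have HB := HG n (Rle_refl 0) (proj1 Hp2) (proj2 Hp2).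
have HE := HGe n. rewrite H0 in HB.
have : (1 - p2) * (1 - eps) <= (1 - p2) * h n p2 by apply: Rmult_le_compat_l; lra.
have : (1 - p2) * eps <= 1 * eps by apply: Rmult_le_compat_r; lra.
have : (1 - p2) * (1 - eps) = (1 - p2) - (1 - p2) * eps by ring.
rewrite /p2 /g0 in HA HB Hp2 |- *; rewrite /g0 in Hr' He3.
lra.
Qed.

Lemma LU_S3 : Lo -> Up -> S3.
Proof.
move=> HL HU eps Heps; apply: ev_cv => tau Htau.
set c := 1 - r.
have Ec : c = 1 - r by [].
have Hle : forall n, th n eps <= th n (1 - eps).
  move=> n; apply: th_ge; first lra.
  move=> s Hs Hts; apply: th_le => //; lra.
have Hlow : ev (fun n => c - tau / 3 <= th n eps).
  case: (Rlt_le_dec (c - tau / 3) 0) => Ha.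
    apply: ev_true => n; have := th_bounds n (ltac:(lra) : eps <= 1); lra.
  have Hap : 0 <= c - tau / 3 < 1 - r by rewrite /c; lra.
  move: (cv_ev (HL _ Hap) (proj1 Heps)); apply: ev_mono => n Hn.
  apply: th_ge; first lra.
  move=> s Hs Hts; apply: Rnot_lt_le => Hsa.
  have := @Hmono n s (c - tau / 3) (proj1 Hs) (Rlt_le _ _ Hsa) (ltac:(lra)); lra.
have Hup : ev (fun n => th n (1 - eps) <= c + tau / 3).
  case: (Rlt_le_dec 1 (c + tau / 3)) => Hb.
    apply: ev_true => n; have := th_bounds n (ltac:(lra) : 1 - eps <= 1); lra.
  have Hbp : 1 - r < c + tau / 3 <= 1 by rewrite /c; lra.
  move: (cv_ev (HU _ Hbp) (proj1 Heps)); apply: ev_mono => n Hn.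
  apply: th_le; lra.
move: (ev_and Hlow Hup); apply: ev_mono => n [Ha Hb].
have := Hle n; lra.
Qed.

Lemma abstract_main : (S1 <-> Lo /\ Up) /\ (Lo /\ Up <-> S3).
Proof.
split; split.
- move=> H; have L := S1_Lo H; exact: (conj L (Lo_Up L)).
- by case=> L _; apply: Lo_S1.
- by case=> L U; apply: LU_S3.
- move=> H; have L := S3_Lo H; exact: (conj L (Lo_Up L)).
Qed.

End Abstract.

Local Close Scope R_scope.
Theorem proposition6 (N : nat -> nat) (C : forall n, {set word (N n)}) (r : R) :
  (forall n, (0 < N n)%N) ->
  (forall n, is_binary_linear_code (C n)) ->
  (forall n, proper_code (C n)) ->
  (forall n, min_dist_ge2 (C n)) ->
  (0 < r < 1)%R ->
  Un_cv (fun n => rate (C n)) r ->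
  (capacity_achieving C r <-> exit_step C r) /\ (exit_step C r <-> exit_sharp C).
Proof.
move=> HN HC Hpr Hmd Hr Hrate.
have Hmono : forall n a b, (0 <= a)%R -> (a <= b)%R -> (b <= 1)%R ->
    (exit_fun (C n) a <= exit_fun (C n) b)%R.
  move=> n a b Ha Hab Hb.
  rewrite (exit_hh (HC n) (conj Ha (Rle_trans _ _ _ Hab Hb))).
  rewrite (exit_hh (HC n) (conj (Rle_trans _ _ _ Ha Hab) Hb)).
  exact: (hh_mono (C n) (HN n) Ha Hab Hb).
have H0 : forall n, exit_fun (C n) 0 = 0%R.
  move=> n; rewrite (exit_hh (HC n) (conj (Rle_refl 0) Rle_0_1)); exact: hh0.
have H1 : forall n, exit_fun (C n) 1 = 1%R.
  move=> n; rewrite (exit_hh (HC n) (conj Rle_0_1 (Rle_refl 1))); exact: hh1.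
have HG : forall n a b, (0 <= a)%R -> (a <= b)%R -> (b <= 1)%R ->
   ((b - a) * exit_fun (C n) a <= Gs (C n) b - Gs (C n) a <= (b - a) * exit_fun (C n) b)%R.
  move=> n a b Ha Hab Hb.
  rewrite (exit_hh (HC n) (conj Ha (Rle_trans _ _ _ Hab Hb))).
  rewrite (exit_hh (HC n) (conj (Rle_trans _ _ _ Ha Hab) Hb)).
  exact: (G_bounds (HC n) (HN n) Ha Hab Hb).
have HGe : forall n, (Gs (C n) 1 - Gs (C n) 0 = rate (C n))%R.
  move=> n; exact: (G_ends (HC n) (HN n)).
have HPb : forall n p, (0 <= p <= 1)%R -> Pb (C n) p = (p * exit_fun (C n) p)%R.
  move=> n p Hp; exact: (Pb_eq (HC n) Hp).
have Hth : forall n t, (t <= 1)%R ->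
    is_glb (fun p => (0 <= p <= 1)%R /\ (t <= exit_fun (C n) p)%R) (exit_threshold (C n) t).
  move=> n t Ht; rewrite /exit_threshold /infR; apply: epsilon_spec.
  apply: glb_exists.
    split; first lra.
    by rewrite H1.
  by move=> p [[Hp _] _].
exact: (@abstract_main (fun n p => exit_fun (C n) p) (fun n p => Gs (C n) p)
          (fun n p => Pb (C n) p) (fun n t => exit_threshold (C n) t)
          (fun n => rate (C n)) r Hr Hrate Hmono H0 H1 HG HGe HPb Hth).
Qed.
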